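(* For $\mu\ge2$, the generating series $W_\mu(q)=\sum_g w_{\mu,g}q^g$, where $w_{\mu,g}$ is the number of weakly admissible compositions of $g$ whose maximal part equals $\mu$, is $$W_\mu(q)=\frac{1+\sum_{i=\lceil\mu/2\rceil}^{\mu}q^i}{1-I_\mu}\;q^\mu\;\frac{1+\sum_{i=\lfloor\mu/2\rfloor}^{\mu-1}q^i}{1-I_{\mu-1}},$$ where for $n\ge1$, $I_n=\sum_{1\le a,b\le n,\ a+b\ge n}q^{a+b}=q^n\bigl(-2+\sum_{i=0}^n(n+1-i)q^i\bigr)$.
   Context: A composition $x_1+\cdots+x_{m-1}$ of $g=\sum x_i$ (parts positive integers) with maximum $\mu$ has a last maximal part $x_l$, i.e. $x_1,\dots,x_{l-1}\le x_l=\mu$ and $x_{l+1},\dots,x_{m-1}<\mu$. It is weakly admissible if $x_l\le x_i+x_{l-i}$ for all $1\le i\le l-1$ and $x_l\le 1+x_{l+i}+x_{m-i}$ for all $1\le i\le m-1-l$. *)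

(* Defs.v *)
From HB Require Import structures.
From mathcomp Require Import all_boot all_order all_algebra.
Set Implicit Arguments. Unset Strict Implicit. Unset Printing Implicit Defensive.
Import Order.TTheory GRing.Theory Num.Theory.

(* 1-based access to the parts of a composition s = [x_1; ...; x_{m-1}] *)
Definition part (s : seq nat) (i : nat) : nat := nth 0 s i.-1.

Definition composition (s : seq nat) (g : nat) : bool :=
  all (fun x => 0 < x) s && (sumn s == g).

(* maximal part (0 for the empty sequence) *)
Definition maxpart (s : seq nat) : nat := \max_(x <- s) x.

Definition last_max (s : seq nat) (l : nat) : bool :=
  [&& 1 <= l <= size s,
      all (fun i => part s i <= part s l) (iota 1 (l - 1))
    & all (fun i => part s i < part s l) (iota l.+1 (size s - l))].

(* weakly admissible (here m - 1 = size s, so m - i = size s + 1 - i) *)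
Definition weakly_admissible (s : seq nat) : bool :=
  has (fun l =>
    [&& last_max s l,
        all (fun i => part s l <= part s i + part s (l - i)) (iota 1 (l - 1))
      & all (fun i => part s l <= 1 + part s (l + i) + part s (size s + 1 - i))
            (iota 1 (size s - l))])
    (iota 1 (size s)).

(* A composition of g has at most g parts, each at most g, so it is encoded
   (injectively) by a k.-tuple of 'I_g.+1 with k <= g. *)
Definition w (mu g : nat) : nat :=
  \sum_(k < g.+1)
    #|[pred t : k.-tuple 'I_g.+1 |
        let s := [seq val i | i <- t] in
        [&& composition s g, weakly_admissible s & maxpart s == mu]]|.

Local Open Scope ring_scope.

Definition Ipoly (n : nat) : {poly int} :=
  \sum_(1 <= a < n.+1) \sum_(1 <= b < n.+1 | (n <= a + b)%N) 'X^(a + b).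

(* Main.v *)
Require Import Defs.
From HB Require Import structures.
From mathcomp Require Import all_boot all_order all_algebra.
From mathcomp Require Import zify.
Import Order.TTheory GRing.Theory Num.Theory.
Set Implicit Arguments. Unset Strict Implicit. Unset Printing Implicit Defensive.


Definition tseqs (g k : nat) : seq (seq nat) :=
  [seq [seq val i | i <- tval t] | t <- enum {: k.-tuple 'I_g.+1}].

Definition U g := flatten [seq tseqs g k | k <- iota 0 g.+1].

Lemma count_tseqs P g k :
  count P (tseqs g k) = #|[pred t : k.-tuple 'I_g.+1 | P [seq val i | i <- t]]|.
Proof.
rewrite count_map cardE /enum_mem -size_filter; congr size.
by rewrite filter_predT.
Qed.

Lemma count_U P g : count P (U g) =
  \sum_(k < g.+1) #|[pred t : k.-tuple 'I_g.+1 | P [seq val i | i <- t]]|.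
Proof.
rewrite /U count_flatten sumnE !big_map.
rewrite (_ : iota 0 g.+1 = index_iota 0 g.+1); last by rewrite /index_iota subn0.
rewrite big_mkord.
by apply: eq_bigr => k _; rewrite count_tseqs.
Qed.

Lemma uniq_flatten_size (F : nat -> seq (seq nat)) r :
  uniq r -> (forall k, uniq (F k)) -> (forall k s, s \in F k -> size s = k) ->
  uniq (flatten (map F r)).
Proof.
move=> + uF sF; elim: r => //= k r IH /andP[kr ur].
rewrite cat_uniq uF IH // andbT; apply/hasPn => s /flattenP [x /mapP [k' k'r ->]] sx.
apply/negP => /sF sk; move: (sF _ _ sx); rewrite sk => ek; subst k'.
by rewrite k'r in kr.
Qed.

Lemma U_uniq g : uniq (U g).
Proof.
apply: uniq_flatten_size; first exact: iota_uniq.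
- move=> k; rewrite map_inj_uniq ?enum_uniq // => t1 t2 /inj_map H.
  by apply: val_inj; apply: H => x y; apply: val_inj.
- by move=> k s /mapP [t _ ->]; rewrite size_map size_tuple.
Qed.

Lemma mem_U g s : size s <= g -> all (fun x => x <= g) s -> s \in U g.
Proof.
move=> Hs Ha; apply/flattenP; exists (tseqs g (size s)).
  by apply/mapP; exists (size s) => //; rewrite mem_iota.
have Hsz : size [seq (inord x : 'I_g.+1) | x <- s] == size s by rewrite size_map.
apply/mapP; exists (Tuple Hsz); first by rewrite mem_enum.
rewrite /= -map_comp map_id_in // => x xs /=; rewrite inordK //.
by move/allP: Ha => /(_ x xs).
Qed.

Lemma comp_size s g : composition s g -> size s <= g.
Proof.
case/andP => /allP Hp /eqP <-; elim: s Hp => //= x s IH H.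
have := H x (mem_head _ _); have := IH (fun y ys => H y (mem_behead (s:=x::s) ys)); lia.
Qed.

Lemma comp_all s g : composition s g -> all (fun x => x <= g) s.
Proof.
case/andP => _ /eqP <-; elim: s => //= x s IH; apply/andP; split; first lia.
by apply: sub_all IH => y /=; lia.
Qed.

Lemma comp_U s g : composition s g -> s \in U g.
Proof. by move=> c; apply: mem_U; [apply: comp_size c | apply: comp_all c]. Qed.

Definition CNT (P : pred (seq nat)) g := count (fun s => composition s g && P s) (U g).

Lemma CNT_bij (P Q : pred (seq nat)) g g' f h :
 (forall s, composition s g -> P s -> [/\ composition (f s) g', Q (f s) & h (f s) = s]) ->
 (forall t, composition t g' -> Q t -> [/\ composition (h t) g, P (h t) & f (h t) = t]) ->
 CNT P g = CNT Q g'.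
Proof.
move=> H1 H2; rewrite /CNT -!size_filter.
set S := filter _ (U g); set T := filter _ (U g').
have uS : uniq S by apply: filter_uniq; apply: U_uniq.
have uT : uniq T by apply: filter_uniq; apply: U_uniq.
rewrite -(size_map f S); apply: perm_size; apply: uniq_perm => //.
- rewrite map_inj_in_uniq // => x y; rewrite !mem_filter.
  move=> /andP[/andP[cx px] _] /andP[/andP[cy py] _] e.
  have [_ _ <-] := H1 x cx px; rewrite e; by have [_ _ ->] := H1 y cy py.
- move=> t; apply/mapP/idP.
  + case=> s; rewrite mem_filter => /andP[/andP[cs ps] _] ->.
    have [c q _] := H1 s cs ps; by rewrite mem_filter c q /= comp_U.
  + rewrite mem_filter => /andP[/andP[ct qt] _].
    have [c p e] := H2 t ct qt; exists (h t) => //.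
    by rewrite mem_filter c p /= comp_U.
Qed.

Lemma CNT0 (P : pred (seq nat)) g :
  (forall s, composition s g -> P s -> False) -> CNT P g = 0.
Proof.
move=> H; rewrite /CNT; apply/eqP; rewrite -leqn0 leqNgt -has_count.
by apply/hasP => [[s _ /andP [c p]]]; apply: (H s c p).
Qed.

Lemma count_split (T K : eqType) (P : pred T) (key : T -> K) (ks : seq K) s :
  uniq ks -> (forall x, P x -> key x \in ks) ->
  count P s = \sum_(k <- ks) count (fun x => P x && (key x == k)) s.
Proof.
move=> uk Hk; elim: s => [|x s IH] /=; first by rewrite big1.
rewrite big_split /= -IH; congr (_ + _).
case Px: (P x) => /=; last by rewrite big1.
have : count_mem (key x) ks = 1 by rewrite count_uniq_mem // Hk.
rewrite -sum1_count big_mkcond /= => <-. apply: eq_bigr => k _; by rewrite eq_sym; case: (_ == _).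
Qed.


Definition pc (n : nat) (z : seq nat) :=
  all (fun i => n <= nth 0 z i + nth 0 z (size z - i.+1)) (iota 0 (size z)).

Lemma maxpart_le s m : (maxpart s <= m) = all (fun x => x <= m) s.
Proof.
apply/bigmax_leqP_seq/allP => H x xs; [exact: H | by move=> _; apply: H].
Qed.

Lemma maxpart_split z m y : all (fun x => x <= m) z -> all (fun x => x < m) y ->
  maxpart (z ++ m :: y) = m.
Proof.
move=> Hz Hy; apply/eqP; rewrite eqn_leq maxpart_le all_cat Hz /= leqnn /=.
rewrite (sub_all _ Hy) /=; last by move=> x /ltnW.
rewrite /maxpart; apply: (@leq_bigmax_seq _ _ xpredT (fun x => x) m) => //; by rewrite mem_cat mem_head orbT.
Qed.

Definition lm s := (size s).-1 - index (maxpart s) (rev s).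
Definition zp s := take (lm s) s.
Definition yp s := drop (lm s).+1 s.

Lemma split_eq z m y : all (fun x => x <= m) z -> all (fun x => x < m) y ->
  zp (z ++ m :: y) = z /\ yp (z ++ m :: y) = y.
Proof.
move=> Hz Hy.
have Hl : lm (z ++ m :: y) = size z.
  rewrite /lm maxpart_split // rev_cat rev_cons cat_rcons index_cat.
  have -> : (m \in rev y) = false.
    rewrite mem_rev; apply/negP => my; move/allP: Hy => /(_ _ my); by rewrite ltnn.
  rewrite /= eqxx size_rev size_cat /=; lia.
rewrite /zp /yp Hl take_size_cat //; split => //.
by rewrite -cat_rcons drop_size_cat // size_rcons.
Qed.

Lemma nth_sz z m y j : j < size z -> nth 0 (z ++ m :: y) j = nth 0 z j.
Proof. by move=> h; rewrite nth_cat h. Qed.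
Lemma nth_sm z m y : nth 0 (z ++ m :: y) (size z) = m.
Proof. by rewrite nth_cat ltnn subnn. Qed.
Lemma nth_sy z m y j k : j = (size z).+1 + k -> nth 0 (z ++ m :: y) j = nth 0 y k.
Proof.
move=> ->; rewrite nth_cat ifF; last by apply/negbTE; rewrite -leqNgt; lia.
by have -> : (size z).+1 + k - size z = k.+1 by lia.
Qed.

Lemma all_shift (P : pred nat) a n : all P (iota a n) = all (fun i => P (a + i)) (iota 0 n).
Proof. by rewrite -{1}(addn0 a) iotaDl all_map. Qed.

Lemma all_nth_iota (Q : pred nat) z :
  all Q z = all (fun i => Q (nth 0 z i)) (iota 0 (size z)).
Proof. by rewrite -{1}(mkseq_nth 0 z) /mkseq all_map. Qed.

Section Conv.
Variables (z y : seq nat) (m : nat).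
Let s := z ++ m :: y.

Lemma part_l : part s (size z).+1 = m.
Proof. by rewrite /part /= nth_sm. Qed.

Lemma conv1 : all (fun i => part s i <= part s (size z).+1) (iota 1 ((size z).+1 - 1))
  = all (fun x => x <= m) z.
Proof.
rewrite part_l all_shift [RHS]all_nth_iota subn1 /=; apply: eq_in_all => i.
rewrite mem_iota add0n => /andP[_ hi]; rewrite /part.
have -> : (1 + i).-1 = i by lia.
by rewrite nth_sz.
Qed.

Lemma conv2 : all (fun i => part s i < part s (size z).+1)
   (iota (size z).+2 (size s - (size z).+1)) = all (fun x => x < m) y.
Proof.
rewrite part_l all_shift [RHS]all_nth_iota.
have -> : size s - (size z).+1 = size y by rewrite /s size_cat /=; lia.
apply: eq_in_all => i; rewrite mem_iota add0n => /andP[_ hi]; rewrite /part.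
by rewrite (@nth_sy _ _ _ _ i) //; lia.
Qed.

Lemma conv3 : all (fun i => part s (size z).+1 <= part s i + part s ((size z).+1 - i))
   (iota 1 ((size z).+1 - 1)) = pc m z.
Proof.
rewrite part_l all_shift /pc subn1 /=; apply: eq_in_all => i.
rewrite mem_iota add0n => /andP[_ hi]; rewrite /part.
have -> : (1 + i).-1 = i by lia.
have -> : ((size z).+1 - (1 + i)).-1 = size z - i.+1 by lia.
by rewrite !nth_sz //; lia.
Qed.

Lemma conv4 : all (fun i => part s (size z).+1 <=
      1 + part s ((size z).+1 + i) + part s (size s + 1 - i))
   (iota 1 (size s - (size z).+1)) = pc m.-1 y.
Proof.
rewrite part_l all_shift /pc.
have Hs : size s = (size z).+1 + size y by rewrite /s size_cat /=; lia.
have -> : size s - (size z).+1 = size y by lia.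
apply: eq_in_all => i; rewrite mem_iota add0n => /andP[_ hi]; rewrite /part.
rewrite (@nth_sy _ _ _ _ i); last by lia.
rewrite (@nth_sy _ _ _ _ (size y - i.+1)); last by lia.
apply/idP/idP; lia.
Qed.
End Conv.

Definition WS mu s := [&& s == zp s ++ mu :: yp s, all (fun x => x <= mu) (zp s),
  all (fun x => x < mu) (yp s), pc mu (zp s) & pc mu.-1 (yp s)].

Lemma WS_build mu z y : all (fun x => x <= mu) z -> all (fun x => x < mu) y ->
  WS mu (z ++ mu :: y) = pc mu z && pc mu.-1 y.
Proof.
move=> Hz Hy; rewrite /WS; have [-> ->] := split_eq Hz Hy; by rewrite eqxx Hz Hy.
Qed.

Lemma WA_iff mu s : (weakly_admissible s && (maxpart s == mu)) = WS mu s.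
Proof.
apply/idP/idP.
- case/andP => /hasP [l lin /and3P [lmx c3 c4]] /eqP mx.
  move: lmx => /and3P [/andP [l1 l2] c1 c2].
  have [z [m [y [es hl]]]] : exists z m y, s = z ++ m :: y /\ l = (size z).+1.
    exists (take l.-1 s), (nth 0 s l.-1), (drop l s); split.
      rewrite -{1}(cat_take_drop l.-1 s) (drop_nth 0); last by lia.
      by rewrite prednK.
    rewrite size_take; case: ifP; lia.
  subst s l.
  rewrite conv1 in c1; rewrite conv2 in c2; rewrite conv3 in c3; rewrite conv4 in c4.
  rewrite maxpart_split // in mx; subst m.
  by rewrite WS_build // c3 c4.
- case/and5P => /eqP es Hz Hy Pz Py.
  move: es Hz Hy Pz Py; move: (zp s) (yp s) => z y -> Hz Hy Pz Py.
  rewrite maxpart_split // eqxx andbT; apply/hasP; exists (size z).+1.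
    by rewrite mem_iota size_cat /=; lia.
  rewrite /last_max conv1 conv2 conv3 conv4 Hz Hy Pz Py !andbT.
  by rewrite size_cat /=; lia.
Qed.


Lemma pc1 n x : pc n [:: x] = (n <= x + x).
Proof. by rewrite /pc /= andbT. Qed.

Lemma nth_acb a m b j : nth 0 (a :: rcons m b) j =
  if j == 0 then a else if j <= size m then nth 0 m j.-1
  else if j == (size m).+1 then b else 0.
Proof.
case: j => [|j] //=. by rewrite nth_rcons eqSS.
Qed.

Lemma pc_acb n a m b : pc n (a :: rcons m b) = (n <= a + b) && pc n m.
Proof.
rewrite /pc /= size_rcons.
have eb : nth 0 (a :: rcons m b) (size m).+1 = b.
  by rewrite nth_acb /= ltnn eqxx.
rewrite (_ : (size m).+2 - 1 = (size m).+1); last by lia.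
have ei : iota 1 (size m).+1 = iota 1 (size m) ++ [:: 1 + size m].
  by rewrite -[(size m).+1]addn1 iotaD.
rewrite eb ei.
rewrite all_cat /= andbT.
rewrite (_ : (size m).+2 - (1 + size m).+1 = 0); last by lia.
rewrite add0n nth_rcons ltnn eqxx /= [b + a]addnC.

have -> : all (fun i => n <= nth 0 (a :: rcons m b) i +
                 nth 0 (a :: rcons m b) ((size m).+2 - i.+1)) (iota 1 (size m))
        = all (fun i => n <= nth 0 m i + nth 0 m (size m - i.+1)) (iota 0 (size m)).
  rewrite all_shift; apply: eq_in_all => i; rewrite mem_iota add0n => /andP[_ hi].
  have e1 : nth 0 (a :: rcons m b) (1 + i) = nth 0 m i by rewrite add1n /= nth_rcons hi.
  rewrite (_ : (size m).+2 - (1+i).+1 = (size m - i.+1).+1); last by lia.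
  rewrite e1 /= nth_rcons ifT //; lia.
by case: (n <= a + b); rewrite ?andbT ?andbF.
Qed.


Lemma WS_dest mu s : WS mu s -> exists z y, [/\ s = z ++ mu :: y,
  all (fun x => x <= mu) z, all (fun x => x < mu) y, pc mu z & pc mu.-1 y].
Proof. case/and5P => /eqP es Hz Hy Pz Py; by exists (zp s), (yp s). Qed.

Definition pairs n := [seq p <- [seq (a, b) | a <- index_iota 1 n.+1, b <- index_iota 1 n.+1]
   | n <= p.1 + p.2].

Lemma pairs_uniq n : uniq (pairs n).
Proof.
apply: filter_uniq; apply: allpairs_uniq; rewrite ?iota_uniq //.
by move=> [x1 x2] [y1 y2] _ _ /= [-> ->].
Qed.

Lemma mem_pairs n a b : ((a, b) \in pairs n) = [&& 1 <= a <= n, 1 <= b <= n & n <= a + b].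
Proof.
rewrite mem_filter /=; apply/andP/idP.
- case=> /= h /allpairsP [[x y] [/= hx hy [ex ey]]]; subst x y.
  move: hx hy; rewrite !mem_iota; lia.
- move=> h; split; first lia.
  apply/allpairsP; exists (a, b) => /=; rewrite !mem_iota; split => //; lia.
Qed.

Lemma sum_pairs n (F : nat * nat -> nat) : \sum_(p <- pairs n) F p =
  \sum_(1 <= a < n.+1) \sum_(1 <= b < n.+1 | n <= a + b) F (a, b).
Proof.
rewrite big_filter big_mkcond big_allpairs; apply: eq_bigr => a _.
by rewrite [RHS]big_mkcond.
Qed.

Definition inner (y : seq nat) := take (size y - 2) (behead y).
Lemma inner_acb a m b : inner (a :: rcons m b) = m.
Proof.
rewrite /inner /= size_rcons -cats1 (_ : (size m).+2 - 2 = size m); last by lia.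
by rewrite take_size_cat.
Qed.

Lemma seq_acb (y : seq nat) : 2 <= size y -> exists a m b, y = a :: rcons m b.
Proof.
case: y => [|a r] //= h; case/lastP: r h => [|m b] //= _; by exists a, m, b.
Qed.

Lemma sumn_acb a m b : sumn (a :: rcons m b) = a + sumn m + b.
Proof. by rewrite /= -cats1 sumn_cat /=; lia. Qed.

Lemma comp_split z m y g : composition (z ++ m :: y) g =
  [&& all (fun x => 0 < x) z, 0 < m, all (fun x => 0 < x) y & sumn z + m + sumn y == g].
Proof. rewrite /composition all_cat /= sumn_cat /= !andbA; congr (_ && _); apply/eqP/eqP; lia. Qed.

Lemma all_acb (P : pred nat) a m b : all P (a :: rcons m b) = [&& P a, all P m & P b].
Proof. by rewrite /= all_rcons; case: (P a); case: (P b); case: (all P m). Qed.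

Section Rec.
Variable mu : nat.
Hypothesis hmu : 2 <= mu.

Definition W g := CNT (WS mu) g.
Definition W0 g := CNT (fun s => WS mu s && (size (yp s) <= 1)) g.
Definition W00 g := CNT (fun s => [&& WS mu s, size (yp s) <= 1 & size (zp s) <= 1]) g.

Definition keyY s : option (nat * nat) :=
  if 2 <= size (yp s) then Some (head 0 (yp s), last 0 (yp s)) else None.
Definition fY s := zp s ++ mu :: inner (yp s).
Definition hY a b t := zp t ++ mu :: a :: rcons (yp t) b.

Lemma recY g : W g = W0 g + \sum_(p <- pairs mu.-1)
   (if p.1 + p.2 <= g then W (g - (p.1 + p.2)) else 0).
Proof.
rewrite /W /CNT (@count_split _ _ _ keyY (None :: map Some (pairs mu.-1))).
- rewrite big_cons big_map; congr (_ + _).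
  + apply: eq_count => s; rewrite /keyY -andbA; congr (_ && (_ && _)).
    case: ifP => h /=; apply: esym; [apply: negbTE; by rewrite -ltnNge | by rewrite leqNgt h].
  + apply: eq_big_seq => [[a b]] /=; rewrite mem_pairs => hab.
    rewrite (_ : count _ _ = CNT (fun s => WS mu s && (keyY s == Some (a, b))) g); last first.
      by apply: eq_count => s; rewrite andbA.
    case: leqP => hg.
    * apply: (@CNT_bij _ _ _ _ fY (hY a b)).
      - move=> s cs /andP [/WS_dest [z [y [es Hz Hy Pz Py]]] ek]; subst s.
        have [ez ey] := split_eq Hz Hy.
        move: ek; rewrite /keyY ey; case: ifP => // hy /eqP [ea eb].
        have [a' [m [b' ey']]] := seq_acb hy; subst y; move: ea eb => /= ea; subst a'.
        rewrite last_rcons => eb; subst b'.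
        move: Hy; rewrite all_acb => /and3P [ha Hm hb].
        move: Py; rewrite pc_acb => /andP [_ Pm].
        rewrite /fY ez ey inner_acb; have [ez' ey'] := split_eq Hz Hm.
        rewrite /hY ez' ey' WS_build // Pz Pm; split => //.
        move: cs; rewrite !comp_split all_acb sumn_acb; lia.
      - move=> t ct /WS_dest [z [m [et Hz Hm Pz Pm]]]; subst t.
        have [ez ey] := split_eq Hz Hm.
        have Hy : all (fun x => x < mu) (a :: rcons m b) by rewrite all_acb Hm /=; lia.
        have [ez' ey'] := split_eq Hz Hy.
        rewrite /hY ez ey /fY ez' ey' inner_acb WS_build // pc_acb Pz Pm.
        rewrite /keyY ey' /= size_rcons last_rcons; split => //; last by case/and3P: hab => _ _ -> /=.
        move: ct; rewrite !comp_split all_acb sumn_acb; lia.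
    * apply: CNT0 => s cs /andP [/WS_dest [z [y [es Hz Hy Pz Py]]] ek]; subst s.
      have [ez ey] := split_eq Hz Hy.
      move: ek; rewrite /keyY ey; case: ifP => // hy /eqP [ea eb].
      have [a' [m [b' ey']]] := seq_acb hy; subst y; move: ea eb => /= ea; subst a'.
      rewrite last_rcons => eb; subst b'.
      move: cs; rewrite comp_split sumn_acb; lia.
- rewrite /= map_inj_uniq ?pairs_uniq ?andbT; last by move=> x y [].
  by apply/mapP => [[x _]].
- move=> s /andP [cs /WS_dest [z [y [es Hz Hy Pz Py]]]]; subst s.
  have [ez ey] := split_eq Hz Hy.
  rewrite /keyY ey; case: ifP => hy; last exact: mem_head.
  have [a [m [b ey']]] := seq_acb hy; subst y.
  rewrite inE /= mem_map; last by move=> x1 x2 [].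
  rewrite last_rcons mem_pairs.
  move: Hy Py cs; rewrite all_acb pc_acb comp_split all_acb.
  lia.
Qed.

Definition keyZ s : option (nat * nat) :=
  if 2 <= size (zp s) then Some (head 0 (zp s), last 0 (zp s)) else None.
Definition fZ s := inner (zp s) ++ mu :: yp s.
Definition hZ a b t := (a :: rcons (zp t) b) ++ mu :: yp t.

Lemma recZ g : W0 g = W00 g + \sum_(p <- pairs mu)
   (if p.1 + p.2 <= g then W0 (g - (p.1 + p.2)) else 0).
Proof.
rewrite /W0 /W00 /CNT (@count_split _ _ _ keyZ (None :: map Some (pairs mu))).
- rewrite big_cons big_map; congr (_ + _).
  + apply: eq_count => s.
    have -> : (keyZ s == None) = (size (zp s) <= 1).
      rewrite /keyZ; case: ifP => h /=; apply: esym; [apply: negbTE; by rewrite -ltnNge | by rewrite leqNgt h].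
    by case: (composition s g); case: (WS mu s); case: (size (yp s) <= 1).
  + apply: eq_big_seq => [[a b]] /=; rewrite mem_pairs => hab.
    rewrite (_ : count _ _ = CNT (fun s => (WS mu s && (size (yp s) <= 1)) && (keyZ s == Some (a, b))) g); last first.
      by apply: eq_count => s; rewrite !andbA.
    case: leqP => hg.
    * apply: (@CNT_bij _ _ _ _ fZ (hZ a b)).
      - move=> s cs /andP [/andP [/WS_dest [z [y [es Hz Hy Pz Py]]] sy] ek]; subst s.
        have [ez ey] := split_eq Hz Hy.
        move: ek; rewrite /keyZ ez; case: ifP => // hz /eqP [ea eb].
        have [a' [m [b' ez']]] := seq_acb hz; subst z; move: ea eb => /= ea; subst a'.
        rewrite last_rcons => eb; subst b'.
        move: Hz; rewrite all_acb => /and3P [ha Hm hb].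
        move: Pz; rewrite pc_acb => /andP [_ Pm].
        rewrite /fZ ez ey inner_acb; have [ez' ey'] := split_eq Hm Hy.
        move: sy; rewrite ey => sy.
        rewrite /hZ ez' ey' WS_build // Pm Py sy; split => //.
        move: cs; rewrite !comp_split all_acb sumn_acb; lia.
      - move=> t ct /andP [/WS_dest [m [y [et Hm Hy Pm Py]]] sy]; subst t.
        have [ez ey] := split_eq Hm Hy.
        have Hz : all (fun x => x <= mu) (a :: rcons m b) by rewrite all_acb Hm /=; lia.
        have [ez' ey'] := split_eq Hz Hy.
        move: sy; rewrite ey => sy.
        rewrite /hZ ez ey /fZ ez' ey' inner_acb WS_build // pc_acb Pm Py sy.
        rewrite /keyZ ez' /= size_rcons last_rcons; split => //; last by case/and3P: hab => _ _ -> /=.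
        move: ct; rewrite -cat_cons !comp_split all_acb sumn_acb; lia.
    * apply: CNT0 => s cs /andP [/andP [/WS_dest [z [y [es Hz Hy Pz Py]]] _] ek]; subst s.
      have [ez ey] := split_eq Hz Hy.
      move: ek; rewrite /keyZ ez; case: ifP => // hz /eqP [ea eb].
      have [a' [m [b' ez']]] := seq_acb hz; subst z; move: ea eb => /= ea; subst a'.
      rewrite last_rcons => eb; subst b'.
      move: cs; rewrite comp_split sumn_acb; lia.
- rewrite /= map_inj_uniq ?pairs_uniq ?andbT; last by move=> x y [].
  by apply/mapP => [[x _]].
- move=> s /andP [cs /andP [/WS_dest [z [y [es Hz Hy Pz Py]]] _]]; subst s.
  have [ez ey] := split_eq Hz Hy.
  rewrite /keyZ ez; case: ifP => hz; last exact: mem_head.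
  have [a [m [b ez']]] := seq_acb hz; subst z.
  rewrite inE /= mem_map; last by move=> x1 x2 [].
  rewrite last_rcons mem_pairs.
  move: Hz Pz cs; rewrite all_acb pc_acb comp_split all_acb.
  lia.
Qed.
End Rec.


Definition Zs mu := [::] :: [seq [:: c] | c <- index_iota (uphalf mu) mu.+1].
Definition Ys mu := [::] :: [seq [:: d] | d <- index_iota (mu./2) mu].

Lemma halves mu : exists o h, [/\ mu = o + 2 * h, uphalf mu = o + h, mu./2 = h & o <= 1].
Proof.
exists (odd mu), mu./2; split => //; last by case: odd.
- by rewrite -{1}(odd_double_half mu) -addnn; lia.
- by rewrite uphalf_half.
Qed.

Lemma uniq_sing (r : seq nat) : uniq r -> uniq ([::] :: [seq [:: c] | c <- r]).
Proof.
move=> ur; rewrite /= map_inj_uniq ?ur ?andbT; last by move=> x y [].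
by apply/mapP => [[x _]].
Qed.

Lemma mem_Zs mu z : 2 <= mu -> z \in Zs mu ->
  [/\ all (fun x => x <= mu) z, all (fun x => 0 < x) z, pc mu z & size z <= 1].
Proof.
move=> hmu; rewrite inE => /orP [/eqP -> //| /mapP [c]]; rewrite mem_iota => hc ->.
have [o [h [e1 e2 e3 e4]]] := halves mu.
rewrite /= pc1 !andbT; split => //; lia.
Qed.

Lemma mem_Ys mu y : 2 <= mu -> y \in Ys mu ->
  [/\ all (fun x => x < mu) y, all (fun x => 0 < x) y, pc mu.-1 y & size y <= 1].
Proof.
move=> hmu; rewrite inE => /orP [/eqP -> //| /mapP [c]]; rewrite mem_iota => hc ->.
have [o [h [e1 e2 e3 e4]]] := halves mu.
rewrite /= pc1 !andbT; split => //; lia.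
Qed.

Lemma W00E mu g : 2 <= mu ->
  W00 mu g = \sum_(z <- Zs mu) \sum_(y <- Ys mu) (sumn z + mu + sumn y == g).
Proof.
move=> hmu.
rewrite /W00 /CNT (@count_split _ _ _ (fun s => (zp s, yp s)) [seq (z, y) | z <- Zs mu, y <- Ys mu]).
- rewrite big_allpairs; apply: eq_big_seq => z zin; apply: eq_big_seq => y yin.
  have [Hz Pos_z Pz sz] := mem_Zs hmu zin.
  have [Hy Pos_y Py sy] := mem_Ys hmu yin.
  have [ez ey] := split_eq Hz Hy.
  rewrite (@eq_count _ _ (fun s => (s == z ++ mu :: y) && (sumn z + mu + sumn y == g))).
    case: eqP => hg; last first.
      by rewrite (@eq_count _ _ pred0) ?count_pred0 // => s; rewrite andbF.
    rewrite (@eq_count _ _ (pred1 (z ++ mu :: y))); last by move=> s; rewrite andbT.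
    rewrite count_uniq_mem ?U_uniq // comp_U // comp_split Pos_z Pos_y /=.
    by apply/andP; split; [lia | apply/eqP].
  move=> s; apply/idP/idP.
  + case/andP => /andP [cs /and3P [/WS_dest [z' [y' [es Hz' Hy' _ _]]] _ _]]; subst s.
    have [ez' ey'] := split_eq Hz' Hy'.
    rewrite ez' ey' => /eqP [e1 e2]; subst z' y'.
    by rewrite eqxx /=; move: cs; rewrite comp_split => /and4P [_ _ _ ->].
  + case/andP => /eqP -> /eqP hg.
    rewrite comp_split Pos_z Pos_y WS_build // Pz Py ez ey sy sz eqxx /=.
    by rewrite andbT; apply/andP; split; [lia | apply/eqP].
- apply: allpairs_uniq; [exact: uniq_sing (iota_uniq _ _) | exact: uniq_sing (iota_uniq _ _) |].
  by move=> [x1 x2] [y1 y2] _ _ /= [-> ->].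
- move=> s /andP [cs /and3P [/WS_dest [z [y [es Hz Hy Pz Py]]] sy sz]]; subst s.
  have [ez ey] := split_eq Hz Hy; rewrite ez ey in sy sz *; clear ez ey.
  have [o [h [e1 e2 e3 e4]]] := halves mu.
  move: cs; rewrite comp_split => /and4P [pz _ py _].
  apply: allpairs_f.
  + move: sz Hz Pz pz; case: z => [|c [|]] //= _.
    rewrite pc1 !andbT => hc hc' hc0; rewrite inE; apply/orP; right.
    apply: map_f; rewrite mem_iota; lia.
  + move: sy Hy Py py; case: y => [|c [|]] //= _.
    rewrite pc1 !andbT => hc hc' hc0; rewrite inE; apply/orP; right.
    apply: map_f; rewrite mem_iota; lia.
Qed.


Lemma sum_ind m p lo hi : (\sum_(m <= a < p) (lo <= a < hi) = minn p hi - maxn m lo)%N.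
Proof.
elim: p => [|p IH]; first by rewrite big_geq //; lia.
case: (leqP m p) => hm.
  rewrite big_nat_recr // /= IH; lia.
rewrite big_geq //. rewrite /minn /maxn; case: ifP; case: ifP; lia.
Qed.

Lemma sum_delta m p j (F : nat -> nat) :
  (\sum_(m <= i < p) F i * (j == i) = if m <= j < p then F j else 0)%N.
Proof.
elim: p => [|p IH]; first by rewrite big_geq //; case: ifP => //; lia.
case: (leqP m p) => hm.
  rewrite big_nat_recr // /= IH.
  case: (eqVneq j p) => [->|ne]; rewrite ?eqxx ?muln1 ?muln0;
    case: ifP => h1; case: ifP => h2; lia.
rewrite big_geq //; case: ifP => //; lia.
Qed.


Section PolyPart.

Local Open Scope ring_scope.

Lemma Posz_sum (I : Type) (r : seq I) (P : pred I) (F : I -> nat) :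
  ((\sum_(i <- r | P i) F i)%N)%:Z = \sum_(i <- r | P i) (F i)%:Z.
Proof. by apply: (big_morph Posz PoszD). Qed.

Lemma coef_IpM n (p : {poly int}) g : (Ipoly n * p)`_g =
  \sum_(1 <= a < n.+1) \sum_(1 <= b < n.+1 | (n <= a + b)%N)
     (if (a + b <= g)%N then p`_(g - (a + b)) else 0).
Proof.
rewrite /Ipoly mulr_suml coef_sum; apply: eq_bigr => a _.
rewrite mulr_suml coef_sum; apply: eq_bigr => b _.
by rewrite coefXnM ltnNge; case: (a + b <= g)%N.
Qed.

Lemma trunc_mul G (r p q : {poly int}) : (forall j, (j <= G)%N -> p`_j = q`_j) ->
  forall g, (g <= G)%N -> (r * p)`_g = (r * q)`_g.
Proof.
move=> H g hg; rewrite !coefM; apply: eq_bigr => [[j hj]] _ /=.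
by rewrite H //; lia.
Qed.

Lemma rec_poly n (F F0 : nat -> nat) G g :
  (forall g, F g = F0 g + \sum_(p <- pairs n) (if (p.1 + p.2 <= g)%N then F (g - (p.1 + p.2)) else 0))%N ->
  (g <= G)%N ->
  ((1 - Ipoly n) * \poly_(j < G.+1) (F j)%:Z)`_g = (F0 g)%:Z.
Proof.
move=> HF hg; rewrite mulrBl mul1r coefB coef_IpM coef_poly ltnS hg HF PoszD.
rewrite sum_pairs Posz_sum -[RHS]addr0 -addrA; congr (_ + _); apply/eqP; rewrite subr_eq0; apply/eqP.
apply: eq_bigr => a _; rewrite Posz_sum; apply: eq_bigr => b _ /=.
case: leqP => // hab; rewrite coef_poly ifT //; lia.
Qed.

Lemma sum_sing (lo hi : nat) : 1 + \sum_(lo <= i < hi) 'X^i =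
  \sum_(z <- [::] :: [seq [:: c] | c <- index_iota lo hi]) 'X^(sumn z) :> {poly int}.
Proof.
rewrite big_cons big_map /= expr0; congr (_ + _); apply: eq_bigr => c _.
by rewrite addn0.
Qed.

Lemma N_coef mu g : (2 <= mu)%N ->
  ((1 + \sum_(uphalf mu <= i < mu.+1) 'X^i) * 'X^mu * (1 + \sum_(mu./2 <= i < mu) 'X^i)
     : {poly int})`_g = (W00 mu g)%:Z.
Proof.
move=> hmu; rewrite !sum_sing W00E // Posz_sum !mulr_suml coef_sum.
apply: eq_bigr => z _; rewrite Posz_sum mulr_sumr coef_sum; apply: eq_bigr => y _.
by rewrite -!exprD coefXn eq_sym; case: eqP.
Qed.

Lemma w_W mu g : w mu g = W mu g.
Proof.
rewrite /W /CNT count_U /w; apply: eq_bigr => k _; apply: eq_card => t /=.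
by rewrite !inE WA_iff.
Qed.

Lemma part2 mu : (2 <= mu)%N ->
     let D : {poly int} := (1 - Ipoly mu) * (1 - Ipoly mu.-1) in
     let N : {poly int} :=
       (1 + \sum_(uphalf mu <= i < mu.+1) 'X^i) * 'X^mu *
       (1 + \sum_(mu./2 <= i < mu) 'X^i) in
     forall g : nat,
       \sum_(k < g.+1) D`_k * (w mu (g - k))%:Z = N`_g.
Proof.
move=> hmu D N g.
have -> : \sum_(k < g.+1) D`_k * (w mu (g - k))%:Z = (D * \poly_(j < g.+1) (W mu j)%:Z)`_g.
  rewrite coefM; apply: eq_bigr => [[k hk]] _ /=; rewrite coef_poly w_W ifT //; lia.
rewrite /D -mulrA (@trunc_mul g _ _ (\poly_(j < g.+1) (W0 mu j)%:Z)) //.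
  rewrite (@rec_poly mu (W0 mu) (W00 mu)) //; last by move=> h; apply: recZ.
  by rewrite /N N_coef.
move=> j hj; rewrite (@rec_poly mu.-1 (W mu) (W0 mu)) //; last by move=> h; apply: recY.
by rewrite coef_poly ltnS hj.
Qed.


Lemma part1 n : (1 <= n)%N ->
  Ipoly n = 'X^n * (- 2%:P + \sum_(0 <= i < n.+1) ((n.+1 - i)%:R *: 'X^i)).
Proof.
move=> hn; apply/polyP => k.
have L : (Ipoly n)`_k = ((\sum_(1 <= a < n.+1) \sum_(1 <= b < n.+1 | (n <= a + b)%N)
            (k == a + b : nat))%N)%:Z.
  rewrite /Ipoly coef_sum Posz_sum; apply: eq_bigr => a _.
  rewrite coef_sum Posz_sum; apply: eq_bigr => b _; rewrite coefXn; by case: eqP.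
have L2 : (\sum_(1 <= a < n.+1) \sum_(1 <= b < n.+1 | (n <= a + b)%N) (k == a + b : nat) =
           \sum_(1 <= a < n.+1) ((k - n <= a < k) && (n <= k) : nat))%N.
  apply: eq_big_nat => a ha; rewrite big_mkcond /=.
  rewrite (@eq_big_nat _ _ _ _ _ _ (fun b => (n <= k) * (a < k) * (k - a == b))%N); last first.
    by move=> b hb; case: ifP => h; lia.
  rewrite sum_delta; case: ifP => h; lia.
rewrite L L2 coefXnM.
case: (ltnP k n) => hk.
  by rewrite big1 //= => a _; lia.
under eq_bigr => a _ do rewrite andbT.
rewrite sum_ind coefD coefN coefC coef_sum.
have -> : \sum_(0 <= i < n.+1) ((n.+1 - i)%:R *: 'X^i : {poly int})`_(k - n) =
          ((\sum_(0 <= i < n.+1) (n.+1 - i) * (k - n == i))%N)%:Z.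
  rewrite Posz_sum; apply: eq_bigr => i _; rewrite coefZ coefXn.
  by case: eqP => _; rewrite ?mulr1 ?mulr0 ?muln1 ?muln0 // natz.
rewrite sum_delta.
rewrite /minn /maxn.
repeat case: ifP; lia.
Qed.

End PolyPart.

Local Open Scope ring_scope.

Theorem proposition9p1 :
  (forall n : nat, (1 <= n)%N ->
     Ipoly n = 'X^n * (- 2%:P + \sum_(0 <= i < n.+1) ((n.+1 - i)%:R *: 'X^i)))
  /\
  (forall mu : nat, (2 <= mu)%N ->
     let D : {poly int} := (1 - Ipoly mu) * (1 - Ipoly mu.-1) in
     let N : {poly int} :=
       (1 + \sum_(uphalf mu <= i < mu.+1) 'X^i) * 'X^mu *
       (1 + \sum_(mu./2 <= i < mu) 'X^i) in
     forall g : nat,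
       \sum_(k < g.+1) D`_k * (w mu (g - k))%:Z = N`_g).
Proof.
split; [exact: part1 | exact: part2].
Qed.
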